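(* Let $S$ and $T$ be linear relations between two vector spaces $\mathcal{H}$ and $\mathcal{K}$. The following three statements are equivalent: (i) $S=T$; (ii) $\ker S=\ker T$ and $\operatorname{ran} S+\operatorname{ran} T\subseteq \operatorname{ran}(S\cap T)$; (iii) $\operatorname{ran} S=\operatorname{ran} T$ and $\ker(S\vee T)\subseteq \ker(S\cap T)$.
   Context: A linear relation between $\mathcal{H}$ and $\mathcal{K}$ is a linear subspace of $\mathcal{H}\times\mathcal{K}$. For such $R$: $\operatorname{ran} R=\{k:(h,k)\in R \text{ for some } h\}$, $\ker R=\{h:(h,0)\in R\}$. $S\cap T$ is the intersection of the subspaces $S,T$, and $S\vee T$ is the linear span of $S\cup T$. *)

(* Defs.v *)
(* vector spaces = lmodType over a fieldType F (arbitrary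
   dimension).  A linear relation between H and K is a linear subspace of
   H x K, represented as a Prop-valued relation R : H -> K -> Prop. *)
From mathcomp Require Import all_boot all_algebra.
Set Implicit Arguments. Unset Strict Implicit. Unset Printing Implicit Defensive.
Import GRing.Theory.
Local Open Scope ring_scope.

Definition linrel {F : fieldType} {H K : lmodType F} (R : H -> K -> Prop) : Prop :=
  [/\ R 0 0,
      (forall h1 k1 h2 k2, R h1 k1 -> R h2 k2 -> R (h1 + h2) (k1 + k2)) &
      (forall (a : F) h k, R h k -> R (a *: h) (a *: k))].

Definition ran {F : fieldType} {H K : lmodType F} (R : H -> K -> Prop) : K -> Prop :=
  fun k => exists h, R h k.

Definition ker {F : fieldType} {H K : lmodType F} (R : H -> K -> Prop) : H -> Prop :=
  fun h => R h 0.

Definition rel_cap {F : fieldType} {H K : lmodType F} (S T : H -> K -> Prop)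
  : H -> K -> Prop := fun h k => S h k /\ T h k.

Definition rel_join {F : fieldType} {H K : lmodType F} (S T : H -> K -> Prop)
  : H -> K -> Prop :=
  fun h k => forall U : H -> K -> Prop, linrel U ->
    (forall h' k', S h' k' -> U h' k') ->
    (forall h' k', T h' k' -> U h' k') -> U h k.

Definition subsp_sum {F : fieldType} {V : lmodType F} (A B : V -> Prop) : V -> Prop :=
  fun v => exists a b, A a /\ B b /\ v = a + b.

Definition subset_of {T : Type} (A B : T -> Prop) : Prop := forall x, A x -> B x.
Definition same_set {T : Type} (A B : T -> Prop) : Prop := forall x, A x <-> B x.

(* Main.v *)
Require Import Defs.
From mathcomp Require Import all_boot all_algebra.
From Stdlib Require Import FunctionalExtensionality PropExtensionality.
Import GRing.Theory.
Local Open Scope ring_scope.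

Lemma lr_sub (F : fieldType) (H K : lmodType F) (R : H -> K -> Prop) :
  linrel R -> forall h k h' k', R h k -> R h' k' -> R (h - h') (k - k').
Proof.
case=> _ hA hZ h k h' k' r r'; apply: hA => //.
by rewrite -!scaleN1r; apply: hZ.
Qed.

Lemma lr_eq (F : fieldType) (H K : lmodType F) (S T : H -> K -> Prop) :
  (forall h k, S h k -> T h k) -> (forall h k, T h k -> S h k) -> S = T.
Proof.
move=> a b; apply: functional_extensionality => h;
apply: functional_extensionality => k; apply: propositional_extensionality; split; auto.
Qed.

Lemma dir2 (F : fieldType) (H K : lmodType F) (S T : H -> K -> Prop) :
  linrel S -> linrel T -> same_set (ker S) (ker T) ->
  subset_of (subsp_sum (ran S) (ran T)) (ran (rel_cap S T)) ->
  forall h k, S h k -> T h k.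
Proof.
move=> hS hT ek sub h k shk.
have [h' [s' t']] : ran (rel_cap S T) k.
  apply: sub; exists k, 0; split; first by exists h.
  split; [by exists 0; case: hT | by rewrite addr0].
have := @lr_sub _ _ _ _ hS _ _ _ _ shk s'; rewrite subrr => /(ek _) tk.
case: hT => _ hA _.
by have := hA _ _ _ _ tk t'; rewrite subrK add0r.
Qed.

Lemma dir3 (F : fieldType) (H K : lmodType F) (S T : H -> K -> Prop) :
  linrel S -> linrel T -> same_set (ran S) (ran T) ->
  subset_of (ker (rel_join S T)) (ker (rel_cap S T)) ->
  forall h k, S h k -> T h k.
Proof.
move=> hS hT er sub h k shk.
have [h' th'] : ran T k by apply/er; exists h.
have [_ tk] : ker (rel_cap S T) (h - h').
  apply: sub => U hU iS iT.
  by have := @lr_sub _ _ _ _ hU _ _ _ _ (iS _ _ shk) (iT _ _ th'); rewrite subrr.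
case: hT => _ hA _.
by have := hA _ _ _ _ tk th'; rewrite subrK add0r.
Qed.

Lemma same_sym T (A B : T -> Prop) : same_set A B -> same_set B A.
Proof. by move=> e x; split => /e. Qed.

Lemma join_cap_sym (F : fieldType) (H K : lmodType F) (S T : H -> K -> Prop) :
  subset_of (ker (rel_join S T)) (ker (rel_cap S T)) ->
  subset_of (ker (rel_join T S)) (ker (rel_cap T S)).
Proof.
move=> s x j; have [a b] : ker (rel_cap S T) x.
  by apply: s => U hU iS iT; apply: j.
by split.
Qed.

Lemma sum_cap_sym (F : fieldType) (H K : lmodType F) (S T : H -> K -> Prop) :
  subset_of (subsp_sum (ran S) (ran T)) (ran (rel_cap S T)) ->
  subset_of (subsp_sum (ran T) (ran S)) (ran (rel_cap T S)).
Proof.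
move=> s x [a [b [ha [hb ->]]]].
have [h [p q]] : ran (rel_cap S T) (a + b).
  by apply: s; exists b, a; rewrite addrC.
by exists h.
Qed.

Theorem corollary3p2 (F : fieldType) (H K : lmodType F)
  (S T : H -> K -> Prop) (hS : linrel S) (hT : linrel T) :
  [/\ (S = T <-> (same_set (ker S) (ker T) /\
                  subset_of (subsp_sum (ran S) (ran T)) (ran (rel_cap S T)))),
      ((same_set (ker S) (ker T) /\
        subset_of (subsp_sum (ran S) (ran T)) (ran (rel_cap S T))) <->
       (same_set (ran S) (ran T) /\
        subset_of (ker (rel_join S T)) (ker (rel_cap S T)))) &
      (S = T <-> (same_set (ran S) (ran T) /\
                  subset_of (ker (rel_join S T)) (ker (rel_cap S T))))].
Proof.
have i2 : S = T -> same_set (ker S) (ker T) /\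
      subset_of (subsp_sum (ran S) (ran T)) (ran (rel_cap S T)).
  move=> <-; split=> // x [a [b [[h1 s1] [[h2 s2] ->]]]].
  exists (h1 + h2); split; case: hS => _ hA _; exact: hA.
have i3 : S = T -> same_set (ran S) (ran T) /\
      subset_of (ker (rel_join S T)) (ker (rel_cap S T)).
  move=> <-; split=> // x j; have s : S x 0 by apply: j.
  by split.
have b2 : same_set (ker S) (ker T) /\
      subset_of (subsp_sum (ran S) (ran T)) (ran (rel_cap S T)) -> S = T.
  case=> e s; apply: lr_eq; first exact: (@dir2 _ _ _ _ _ hS hT e s).
  exact: (@dir2 _ _ _ _ _ hT hS (same_sym _ _ _ e) (sum_cap_sym _ _ _ _ _ s)).
have b3 : same_set (ran S) (ran T) /\
      subset_of (ker (rel_join S T)) (ker (rel_cap S T)) -> S = T.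
  case=> e s; apply: lr_eq; first exact: (@dir3 _ _ _ _ _ hS hT e s).
  exact: (@dir3 _ _ _ _ _ hT hS (same_sym _ _ _ e) (join_cap_sym _ _ _ _ _ s)).
split; split; auto.
Qed.
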